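(* Let $P=(P_1,\dots,P_m):\mathbb{R}^n\to\mathbb{R}^m$ be a polynomial map with $P(0)=0$ and let $r\ge1$. The following are equivalent: (a) there exist $C,\varepsilon,\sigma>0$ such that $\mathscr{D}(\operatorname{grad}P_1(x),\dots,\operatorname{grad}P_m(x))\ge C|x|^{r-1}$ for all $x\in\mathscr{H}_{r}(P;\sigma)$ with $|x|<\varepsilon$; (b) there exist $q>0$, $\varepsilon>0$ such that $|P(x)|\cdot|y|+|(dP)^{*}(x)y|\cdot|x|\ge q|x|^{r}|y|$ for all $|x|<\varepsilon$ and all $y\in\mathbb{R}^m$.
   Context: $|\cdot|$ is the Euclidean norm; $(dP)^{*}(x)$ is the transpose of the Jacobian of $P$ at $x$. The horn-neighbourhood is $\mathscr{H}_{s}(F;\sigma)=\{x\in\mathbb{R}^{n}: |F(x)|<\sigma|x|^{s}\}$. For $v_1,\dots,v_m\in\mathbb{R}^n$, $\mathscr{D}(v_{1},\dots,v_{m})=\min_{i}\operatorname{dist}(v_{i},V_{i})$, where $V_{i}$ is the linear span of the $v_{j}$, $j\neq i$. *)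

(* Defs.v *)
From Stdlib Require Import Reals Lra Lia Arith.
Open Scope R_scope.

(* Vectors of R^n are represented as functions nat -> R; only the
   coordinates 0..n-1 are ever used. *)

Fixpoint sumR (n : nat) (f : nat -> R) : R :=
  match n with
  | O => 0
  | S k => sumR k f + f k
  end.

Definition norm (n : nat) (x : nat -> R) : R :=
  sqrt (sumR n (fun i => x i * x i)).

(* |t|^a for t >= 0, with the convention 0^a = 0 (only used with t = |x|). *)
Definition rpow (t a : R) : R :=
  if Rle_dec t 0 then 0 else Rpower t a.

Inductive is_poly (n : nat) : ((nat -> R) -> R) -> Prop :=
| poly_const (c : R) : is_poly n (fun _ => c)
| poly_var (i : nat) : (i < n)%nat -> is_poly n (fun x => x i)
| poly_add (p q : (nat -> R) -> R) :
    is_poly n p -> is_poly n q -> is_poly n (fun x => p x + q x)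
| poly_mul (p q : (nat -> R) -> R) :
    is_poly n p -> is_poly n q -> is_poly n (fun x => p x * q x).

Definition shift (x : nat -> R) (j : nat) (t : R) : nat -> R :=
  fun k => if Nat.eqb k j then x k + t else x k.

Definition is_grad (n : nat) (f : (nat -> R) -> R) (x : nat -> R)
  (g : nat -> R) : Prop :=
  forall j, (j < n)%nat -> derivable_pt_lim (fun t => f (shift x j t)) 0 (g j).

(* D(v_0,...,v_{m-1}) >= a, with v_i in R^n: for every i, the distance from
   v_i to V_i = span{v_j : j <> i} is >= a, i.e. |v_i - sum_{j<>i} c_j v_j| >= a
   for all coefficients c (this is the literal unfolding of min_i inf_c ... >= a). *)
Definition D_ge (n m : nat) (v : nat -> nat -> R) (a : R) : Prop :=
  forall i, (i < m)%nat -> forall c : nat -> R,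
    a <= norm n (fun k => v i k - sumR m (fun j => if Nat.eqb j i then 0 else c j * v j k)).

(* Main.v *)
Require Import Defs.
From Stdlib Require Import Reals Lra Lia Arith.
Open Scope R_scope.

Lemma sumR_ext n f g : (forall j, f j = g j) -> sumR n f = sumR n g.
Proof. intros H; induction n; simpl; [reflexivity| rewrite IHn, H; reflexivity]. Qed.

Lemma sumR_plus n f g : sumR n (fun j => f j + g j) = sumR n f + sumR n g.
Proof. induction n; simpl; [lra| rewrite IHn; lra]. Qed.

Lemma sumR_scal n a f : sumR n (fun j => a * f j) = a * sumR n f.
Proof. induction n; simpl; [lra| rewrite IHn; lra]. Qed.

Lemma sumR_delta n i a : (i < n)%nat -> sumR n (fun j => if Nat.eqb j i then a else 0) = a.
Proof.
  induction n; intros Hi; [lia|]. simpl.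
  destruct (Nat.eq_dec i n) as [->|Hne].
  - rewrite Nat.eqb_refl.
    assert (sumR n (fun j => if Nat.eqb j n then a else 0) = 0) as ->.
    { clear. assert (forall k, (k <= n)%nat -> sumR k (fun j => if Nat.eqb j n then a else 0) = 0).
      { induction k; intros Hk; simpl; [reflexivity|].
        rewrite IHk by lia. replace (Nat.eqb k n) with false by (symmetry; apply Nat.eqb_neq; lia). lra. }
      apply H; lia. }
    lra.
  - rewrite IHn by lia. replace (Nat.eqb n i) with false by (symmetry; apply Nat.eqb_neq; lia). lra.
Qed.

Lemma sumR_split n i f : (i < n)%nat ->
  sumR n f = f i + sumR n (fun j => if Nat.eqb j i then 0 else f j).
Proof.
  intros Hi. rewrite <- (sumR_delta n i (f i) Hi), <- sumR_plus.
  apply sumR_ext. intros j. destruct (Nat.eqb_spec j i); subst; lra.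
Qed.

Lemma sumR_nonneg n f : (forall j, 0 <= f j) -> 0 <= sumR n f.
Proof. intros H; induction n; simpl; [lra| specialize (H n); lra]. Qed.

Lemma norm_nonneg n x : 0 <= norm n x.
Proof. unfold norm; apply sqrt_pos. Qed.

Lemma norm_ext n f g : (forall k, f k = g k) -> norm n f = norm n g.
Proof. intros H; unfold norm; f_equal; apply sumR_ext; intros; rewrite H; reflexivity. Qed.

Lemma norm_scal n a w : norm n (fun k => a * w k) = Rabs a * norm n w.
Proof.
  unfold norm.
  rewrite (sumR_ext n _ (fun k => (a*a) * (w k * w k))) by (intros; ring).
  rewrite sumR_scal, sqrt_mult.
  - rewrite <- sqrt_Rsqr_abs. reflexivity.
  - nra.
  - apply sumR_nonneg; intros; nra.
Qed.

Lemma norm_ge_coord n y i : (i < n)%nat -> Rabs (y i) <= norm n y.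
Proof.
  intros Hi. unfold norm. rewrite (sumR_split n i _ Hi).
  rewrite <- sqrt_Rsqr_abs. apply sqrt_le_1_alt. unfold Rsqr.
  assert (0 <= sumR n (fun j => if Nat.eqb j i then 0 else y j * y j)).
  { apply sumR_nonneg; intros j; destruct (Nat.eqb j i); nra. }
  lra.
Qed.

Lemma sq_le_abs a M : Rabs a <= M -> a * a <= M * M.
Proof.
  intros H. assert (a * a = Rabs a * Rabs a) by (pose proof (Rsqr_abs a); unfold Rsqr in *; lra).
  pose proof (Rabs_pos a). nra.
Qed.

Lemma norm_le_max n y M : 0 <= M -> (forall j, (j < n)%nat -> Rabs (y j) <= M) ->
  norm n y <= (INR n + 1) * M.
Proof.
  intros HM H.
  assert (Hs : sumR n (fun j => y j * y j) <= INR n * (M * M)).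
  { clear HM. induction n; [simpl; lra|]. rewrite S_INR; simpl sumR.
    assert (Rabs (y n) <= M) by (apply H; lia).
    assert (y n * y n <= M * M) by (apply sq_le_abs; auto).
    assert (sumR n (fun j => y j * y j) <= INR n * (M * M)) by (apply IHn; intros; apply H; lia).
    lra. }
  unfold norm. rewrite <- (sqrt_Rsqr ((INR n + 1) * M)).
  - apply sqrt_le_1_alt. unfold Rsqr. pose proof (pos_INR n). nra.
  - pose proof (pos_INR n). nra.
Qed.

Lemma exists_max n (y : nat -> R) : (0 < n)%nat ->
  exists i, (i < n)%nat /\ forall j, (j < n)%nat -> Rabs (y j) <= Rabs (y i).
Proof.
  induction n; intros Hn; [lia|].
  destruct n.
  - exists 0%nat; split; [lia|]. intros j Hj. replace j with 0%nat by lia. lra.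
  - destruct IHn as [i [Hi Hm]]; [lia|].
    destruct (Rle_dec (Rabs (y (S n))) (Rabs (y i))).
    + exists i; split; [lia|]. intros j Hj. destruct (Nat.eq_dec j (S n)); [subst; lra|]. apply Hm; lia.
    + exists (S n); split; [lia|]. intros j Hj. destruct (Nat.eq_dec j (S n)); [subst; lra|].
      specialize (Hm j ltac:(lia)). lra.
Qed.

Lemma rpow_nonneg t a : 0 <= rpow t a.
Proof. unfold rpow. destruct (Rle_dec t 0); [lra|]. unfold Rpower. left; apply exp_pos. Qed.

Lemma rpow_step t r : 0 < t -> rpow t (r - 1) * t = rpow t r.
Proof.
  intros Ht. unfold rpow. destruct (Rle_dec t 0); [lra|].
  rewrite <- (Rpower_1 t) at 2 by lra. rewrite <- Rpower_plus. f_equal; ring.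
Qed.

Lemma rpow_le0 t a : t <= 0 -> rpow t a = 0.
Proof. intros H; unfold rpow; destruct (Rle_dec t 0); [reflexivity|lra]. Qed.

Theorem mainTheorem5 (n m : nat) (P : nat -> (nat -> R) -> R)
  (G : nat -> (nat -> R) -> nat -> R) (r : R)
  (Hpoly : forall i, (i < m)%nat -> is_poly n (P i))
  (HP0 : forall i, (i < m)%nat -> P i (fun _ => 0) = 0)
  (HG : forall i, (i < m)%nat -> forall x, is_grad n (P i) x (G i x))
  (Hr : 1 <= r) :
  (exists C eps sigma, 0 < C /\ 0 < eps /\ 0 < sigma /\
     forall x : nat -> R,
       norm n x < eps ->
       norm m (fun i => P i x) < sigma * rpow (norm n x) r ->
       D_ge n m (fun i => G i x) (C * rpow (norm n x) (r - 1)))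
  <->
  (exists q eps, 0 < q /\ 0 < eps /\
     forall (x : nat -> R) (y : nat -> R),
       norm n x < eps ->
       norm m (fun i => P i x) * norm m y
         + norm n (fun k => sumR m (fun i => y i * G i x k)) * norm n x
       >= q * rpow (norm n x) r * norm m y).
Proof.
  split.
  - intros [C [eps [sigma [HC [He [Hs H]]]]]].
    exists (Rmin (C / (INR m + 1)) sigma), eps.
    assert (Hm1 : 0 < INR m + 1) by (pose proof (pos_INR m); lra).
    assert (Hq : 0 < Rmin (C / (INR m + 1)) sigma)
      by (apply Rmin_glb_lt; [apply Rdiv_lt_0_compat|]; lra).
    split; [exact Hq|]. split; [exact He|].
    intros x y Hx.
    set (q := Rmin (C / (INR m + 1)) sigma) in *.
    set (nx := norm n x). set (np := norm m (fun i => P i x)). set (ny := norm m y).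
    set (na := norm n (fun k => sumR m (fun i => y i * G i x k))).
    assert (0 <= nx) by apply norm_nonneg. assert (0 <= np) by apply norm_nonneg.
    assert (0 <= ny) by apply norm_nonneg. assert (0 <= na) by apply norm_nonneg.
    assert (0 <= rpow nx r) by apply rpow_nonneg.
    assert (q <= sigma) by apply Rmin_r.
    assert (q <= C / (INR m + 1)) by apply Rmin_l.
    destruct (Rle_dec (sigma * rpow nx r) np) as [Hout|Hin].
    + assert (q * rpow nx r * ny <= sigma * rpow nx r * ny) by
        (apply Rmult_le_compat_r; [auto|]; apply Rmult_le_compat_r; auto).
      nra.
    + apply Rnot_le_lt in Hin.
      specialize (H x Hx Hin).
      destruct (Nat.eq_dec m 0) as [Hm0|Hm0].
      { assert (Hz : ny = 0). { unfold ny, norm. rewrite Hm0. simpl. apply sqrt_0. }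
        rewrite Hz. nra. }
      destruct (exists_max m y ltac:(lia)) as [i [Hi Hmax]].
      assert (HnyM : ny <= (INR m + 1) * Rabs (y i))
        by (apply norm_le_max; [apply Rabs_pos| exact Hmax]).
      destruct (Req_dec (y i) 0) as [Hyi|Hyi].
      { rewrite Hyi, Rabs_R0 in HnyM. assert (Hz : ny = 0) by lra. rewrite Hz. nra. }
      destruct (Rle_dec nx 0) as [Hnx|Hnx].
      { rewrite (rpow_le0 nx r Hnx). nra. }
      apply Rnot_le_lt in Hnx.
      specialize (H i Hi (fun j => - y j / y i)).
      assert (Hna : na = Rabs (y i) *
        norm n (fun k => G i x k - sumR m (fun j => if Nat.eqb j i then 0 else (- y j / y i) * G j x k))).
      { unfold na. rewrite <- norm_scal. apply norm_ext. intros k.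
        rewrite (sumR_split m i _ Hi).
        rewrite (sumR_ext m (fun j => if Nat.eqb j i then 0 else (- y j / y i) * G j x k)
                 (fun j => (- / y i) * (if Nat.eqb j i then 0 else y j * G j x k))).
        - rewrite sumR_scal. field. exact Hyi.
        - intros j. destruct (Nat.eqb j i); [ring|]. field. exact Hyi. }
      set (N := norm n _) in Hna, H.
      pose proof (Rabs_pos (y i)).
      assert (na >= Rabs (y i) * (C * rpow nx (r - 1))) by (rewrite Hna; apply Rle_ge, Rmult_le_compat_l; [lra| exact H]).
      assert (na * nx >= Rabs (y i) * C * rpow nx r).
      { rewrite <- (rpow_step nx r Hnx). pose proof (rpow_nonneg nx (r-1)). nra. }
      assert (q * ny <= C * Rabs (y i)).
      { apply Rle_trans with (C / (INR m + 1) * ((INR m + 1) * Rabs (y i))).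
        - apply Rmult_le_compat; lra.
        - right; field; lra. }
      assert (q * rpow nx r * ny <= C * Rabs (y i) * rpow nx r) by nra.
      nra.
  - intros [q [eps [Hq [He H]]]].
    exists (q / 2), eps, (q / 2).
    split; [lra|]. split; [exact He|]. split; [lra|].
    intros x Hx Hin i Hi c.
    set (nx := norm n x) in *. set (np := norm m (fun i => P i x)) in *.
    assert (0 <= nx) by apply norm_nonneg. assert (0 <= np) by apply norm_nonneg.
    assert (Hnx : 0 < nx).
    { destruct (Rle_dec nx 0) as [h|h]; [|lra]. rewrite (rpow_le0 nx r h) in Hin. lra. }
    set (y := fun j => if Nat.eqb j i then 1 else - c j).
    specialize (H x y Hx). fold nx np in H.
    assert (Hy1 : 1 <= norm m y).
    { pose proof (norm_ge_coord m y i Hi). unfold y in H2 at 1. rewrite Nat.eqb_refl, Rabs_R1 in H2. exact H2. }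
    assert (Heq : norm n (fun k => sumR m (fun i0 => y i0 * G i0 x k)) =
       norm n (fun k => G i x k - sumR m (fun j => if Nat.eqb j i then 0 else c j * G j x k))).
    { apply norm_ext. intros k. rewrite (sumR_split m i _ Hi). unfold y at 1. rewrite Nat.eqb_refl.
      rewrite (sumR_ext m _ (fun j => - (if Nat.eqb j i then 0 else c j * G j x k))).
      - assert (forall f, sumR m (fun j => - f j) = - sumR m f) as ->.
        { intros f. clear. induction m; simpl; [lra| rewrite IHm; lra]. }
        ring.
      - intros j. unfold y. destruct (Nat.eqb j i); ring. }
    rewrite Heq in H. set (N := norm n _) in H |- *.
    assert (0 <= N) by apply norm_nonneg.
    set (ny := norm m y) in *.
    pose proof (rpow_nonneg nx r). pose proof (rpow_nonneg nx (r-1)).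
    rewrite <- (rpow_step nx r Hnx) in H, Hin.
    set (R1 := rpow nx (r - 1)) in *.
    assert (N * nx >= q / 2 * R1 * nx * ny) by nra.
    assert (N >= q / 2 * R1 * ny).
    { apply Rle_ge, Rmult_le_reg_r with nx; [lra|]. lra. }
    nra.
Qed.
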